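(* Every fragile graph $G$ with $|V(G)|\geq 4$ satisfies $|E(G)|\leq 2.5|V(G)|-5$. Consequently every non-null fragile graph has a vertex of degree at most $4$.
   Context: All graphs are finite and simple. A graph is $k$-connected if it has at least $k+1$ vertices and no vertex cutset with at most $k-1$ vertices. A graph is fragile if it has no $3$-connected subgraph. *)

(* Defs.v *)
(* A finite simple graph is (T, e) with T : finType and
   e : rel T symmetric and irreflexive; V(G) = T. *)
From mathcomp Require Import all_boot.
Set Implicit Arguments. Unset Strict Implicit. Unset Printing Implicit Defensive.

Section Graphs.
Variable T : finType.

Definition connected_on (W : {set T}) (f : rel T) : Prop :=
  forall x y, x \in W -> y \in W ->
    connect [rel u v | [&& f u v, u \in W & v \in W]] x y.

Definition k_connected (k : nat) (S : {set T}) (f : rel T) : Prop :=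
  k.+1 <= #|S| /\
  forall X : {set T}, X \subset S -> #|X| <= k.-1 -> connected_on (S :\: X) f.

Definition is_subgraph (e : rel T) (S : {set T}) (f : rel T) : Prop :=
  symmetric f /\ (forall x y, f x y -> [&& e x y, x \in S & y \in S]).

Definition fragile (e : rel T) : Prop :=
  ~ exists (S : {set T}) (f : rel T), is_subgraph e S f /\ k_connected 3 S f.

Definition edge_set (e : rel T) : {set {set T}} :=
  [set [set x; y] | x in T, y in T & e x y].

Definition degree (e : rel T) (v : T) : nat := #|[set u | e v u]|.

End Graphs.

(* Main.v *)
Require Import Defs.
From mathcomp Require Import all_boot.
From Stdlib Require Import Classical.
From mathcomp Require Import zify.

Section Aux.
Variable T : finType.
Variable e : rel T.
Hypothesis esym : symmetric e.
Hypothesis eirr : irreflexive e.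

Definition Es (S : {set T}) := [set E in edge_set e | E \subset S].

Lemma edgeP E : reflect (exists x y, e x y /\ E = [set x; y]) (E \in edge_set e).
Proof.
apply: (iffP imset2P).
  by case=> x y _; rewrite inE => /andP [_ H] ->; exists x, y.
case=> x [y [H ->]]; exists x y => //; by rewrite inE H.
Qed.

Lemma Es_card (S : {set T}) : #|Es S| <= 'C(#|S|, 2).
Proof.
rewrite -cards_draws; apply: subset_leq_card; apply/subsetP => E.
rewrite !inE => /andP [/edgeP [x [y [H ->]]] Hs]; rewrite Hs cards2 /=.
have xy : x != y by apply: contraTneq H => ->; rewrite eirr.
by rewrite xy.
Qed.

Lemma Es_card_strict (S X : {set T}) : X \subset S -> #|X| = 2 -> X \notin edge_set e ->
  #|Es S| < 'C(#|S|, 2).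
Proof.
move=> XS X2 Xn; rewrite -cards_draws.
rewrite (cardsD1 X [set A : {set T} | A \subset S & #|A| == 2]) inE XS X2 eqxx /=.
rewrite ltnS; apply: subset_leq_card; apply/subsetP => E.
rewrite !inE => /andP [EE Hs]; rewrite Hs.
have EX : E != X by apply: contraNneq Xn => <-.
rewrite EX /=; case/edgeP: EE => x [y [H ->]]; rewrite cards2.
have xy : x != y by apply: contraTneq H => ->; rewrite eirr.
by rewrite xy.
Qed.

Lemma smallC m E : E <= 'C(m, 2) -> 1 <= m <= 3 ->
  2 * E + 10 <= 5 * m + 5 /\ (2 <= m -> 2 * E + 10 <= 5 * m + 2)
    /\ (3 <= m -> 2 * E + 10 <= 5 * m + 1).
Proof.
move=> H /andP [H1 H3].
have C1 : 'C(1,2) = 0 by []. have C2 : 'C(2,2) = 1 by []. have C3 : 'C(3,2) = 3 by [].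
case: m H H1 H3 => [|[|[|[|m]]]] // H H1 H3;
  rewrite ?C1 ?C2 ?C3 in H; lia.
Qed.


Lemma side n1 E1 k : k < n1 -> (4 <= n1 -> 2 * E1 + 10 <= 5 * n1) ->
  E1 <= 'C(n1, 2) ->
  (k = 0 -> 2 * E1 + 10 <= 5 * n1 + 5) /\ (k = 1 -> 2 * E1 + 10 <= 5 * n1 + 2)
  /\ (k = 2 -> 2 * E1 + 10 <= 5 * n1 + 1).
Proof.
move=> kn IH1 HC; case: (leqP 4 n1) => H.
  by have := IH1 H; lia.
have h : 1 <= n1 <= 3 by apply/andP; split; lia.
have [h1 [h2 h3]] := @smallC _ _ HC h.
split; first by move=> _; exact: h1.
split; move=> hk; [apply: h2 | apply: h3]; lia.
Qed.

Lemma side_strict n1 E1 : 2 < n1 -> (4 <= n1 -> 2 * E1 + 10 <= 5 * n1) ->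
  E1 < 'C(n1, 2) -> 2 * E1 + 10 <= 5 * n1.
Proof.
move=> kn IH1 HC; case: (leqP 4 n1) => H; first exact: IH1.
have h : 1 <= n1 <= 3 by apply/andP; split; lia.
have [h1 [h2 h3]] := @smallC _ _ HC h.
have := h3 kn; lia.
Qed.

Lemma ar0 n1 n2 E1 E2 Ex : Ex = 0 -> 2 * E1 + 10 <= 5 * n1 + 5 ->
  2 * E2 + 10 <= 5 * n2 + 5 -> 2 * (E1 + E2 - Ex) + 10 <= 5 * (n1 + n2 - 0).
Proof. lia. Qed.
Lemma ar1 n1 n2 E1 E2 Ex : 1 < n1 -> Ex = 0 -> 2 * E1 + 10 <= 5 * n1 + 2 ->
  2 * E2 + 10 <= 5 * n2 + 2 -> 2 * (E1 + E2 - Ex) + 10 <= 5 * (n1 + n2 - 1).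
Proof. lia. Qed.
Lemma ar2 n1 n2 E1 E2 Ex : 2 < n1 -> 0 < Ex -> Ex <= E1 -> 2 * E1 + 10 <= 5 * n1 + 1 ->
  2 * E2 + 10 <= 5 * n2 + 1 -> 2 * (E1 + E2 - Ex) + 10 <= 5 * (n1 + n2 - 2).
Proof. lia. Qed.
Lemma ar3 n1 n2 E1 E2 Ex : 2 < n1 -> Ex <= E1 -> 2 * E1 + 10 <= 5 * n1 ->
  2 * E2 + 10 <= 5 * n2 -> 2 * (E1 + E2 - Ex) + 10 <= 5 * (n1 + n2 - 2).
Proof. lia. Qed.

Lemma main_bound (frag : fragile e) :
  forall S : {set T}, 4 <= #|S| -> 2 * #|Es S| + 10 <= 5 * #|S|.
Proof.
move=> S0; have [n Hn] := ubnP #|S0|; elim: n S0 Hn => // n IH S Hn H4.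
pose f := [rel u v | [&& e u v, u \in S & v \in S]].
have notk : ~ k_connected 3 S f.
  move=> Hk; apply: frag; exists S, f; split=> //; split => //.
  by move=> u v /=; rewrite esym; case: (u \in S); case: (v \in S); rewrite ?andbT ?andbF.
have [X [XS [X2 HX]]] : exists X : {set T}, X \subset S /\ #|X| <= 2 /\ ~ connected_on (S :\: X) f.
  apply: NNPP => Hno; apply: notk; split=> // X XS X2.
  by apply: NNPP => Hc; apply: Hno; exists X.
pose W := S :\: X.
pose r := [rel u v | [&& f u v, u \in W & v \in W]].
have [x [y [xW [yW nxy]]]] : exists x y, x \in W /\ y \in W /\ ~ connect r x y.
  apply: NNPP => Hno; apply: HX => x y xW yW; apply: NNPP => nc; apply: Hno.
  by exists x, y.
pose A := [set z in W | connect r x z].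
pose B := W :\: A.
have inA z : (z \in A) = (z \in W) && connect r x z by rewrite inE.
have inB z : (z \in B) = (z \notin A) && (z \in W) by rewrite inE.
have inW z : (z \in W) = (z \notin X) && (z \in S) by rewrite inE.
have WS : W \subset S by apply: subsetDl.
have key : forall u v, u \in A -> v \in B -> ~~ e u v.
  move=> u v; rewrite inB !inA => /andP [uW cxu] /andP [/negP nvA vW].
  apply/negP => euv; apply: nvA; rewrite vW /=.
  apply: connect_trans cxu (connect1 _).
  by rewrite /r /f /= euv uW vW (subsetP WS u uW) (subsetP WS v vW).
pose S1 := A :|: X. pose S2 := B :|: X.
have HU : S1 :|: S2 = S.
  apply/setP => z; rewrite /S1 /S2 !in_setU inB inA inW.
  case Xz: (z \in X); first by rewrite (subsetP XS z Xz) !orbT.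
  by case: (z \in S); case: (connect r x z).
have HI : S1 :&: S2 = X.
  apply/setP => z; rewrite /S1 /S2 in_setI !in_setU inB inA inW.
  by case: (z \in X); case: (z \in S); case: (connect r x z).
have xA : x \in A by rewrite inA xW connect0.
have yB : y \in B by rewrite inB inA yW andbT; apply/negP => /andP [_ ?].
have xnX : x \notin X by move: xW; rewrite inW => /andP [].
have ynX : y \notin X by move: yW; rewrite inW => /andP [].
have xS : x \in S by move: xW; rewrite inW => /andP [].
have yS : y \in S by move: yW; rewrite inW => /andP [].
have S1p : S1 \proper S.
  apply/properP; split; first by rewrite -HU subsetUl.
  exists y => //; rewrite /S1 in_setU negb_or ynX andbT.
  by move: yB; rewrite inB => /andP [].
have S2p : S2 \proper S.
  apply/properP; split; first by rewrite -HU subsetUr.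
  by exists x => //; rewrite /S2 in_setU negb_or xnX andbT inB xA.
have XS1 : X \proper S1.
  by apply/properP; split; [apply: subsetUr | exists x; rewrite // in_setU xA].
have XS2 : X \proper S2.
  by apply/properP; split; [apply: subsetUr | exists y; rewrite // in_setU yB].
have EU : Es S1 :|: Es S2 = Es S.
  apply/setP => E; rewrite !inE.
  case EE: (E \in edge_set e) => //=.
  case/edgeP: EE => u [v [euv ->]].
  rewrite -HU !subUset !sub1set /S1 /S2 !in_setU.
  have k : ~~ ((u \in A) && (v \in B)) && ~~ ((v \in A) && (u \in B)).
    apply/andP; split; apply/negP => /andP [h1 h2].
    - by have := key u v h1 h2; rewrite euv.
    - by have := key v u h1 h2; rewrite esym euv.
  apply/eqP; move: k; apply/implyP.
  by case: (u \in A); case: (u \in B); case: (u \in X);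
     case: (v \in A); case: (v \in B); case: (v \in X).
have EI : Es S1 :&: Es S2 = Es X.
  apply/setP => E; rewrite !inE -HI subsetI.
  by rewrite andbACA andbb.
have cS : #|S| = #|S1| + #|S2| - #|X| by rewrite -HU cardsU HI.
have cE : #|Es S| = #|Es S1| + #|Es S2| - #|Es X| by rewrite -EU cardsU EI.
have ExE1 : #|Es X| <= #|Es S1| by rewrite -EI subset_leq_card // subsetIl.
have ExE2 : #|Es X| <= #|Es S2| by rewrite -EI subset_leq_card // subsetIr.
have pS1 := proper_card S1p. have pS2 := proper_card S2p.
have pX1 := proper_card XS1. have pX2 := proper_card XS2.
rewrite ltnS in Hn.
have IH1 := IH S1 (leq_trans pS1 Hn). have IH2 := IH S2 (leq_trans pS2 Hn).
have Ex1 : #|X| <= 1 -> #|Es X| = 0.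
  move=> X1; apply/eqP; rewrite -leqn0; apply: leq_trans (Es_card X) _.
  by case: #|X| X1 => [|[|]].
have Ex2 : #|Es X| <= 1.
  apply: leq_trans (Es_card X) _.
  by case: #|X| X2 => [|[|[|]]].
have Ref : #|X| = 2 -> 1 <= #|Es X| \/ (#|Es S1| < 'C(#|S1|, 2) /\ #|Es S2| < 'C(#|S2|, 2)).
  move=> HX2; case XE: (X \in edge_set e).
    left; rewrite card_gt0; apply/set0Pn; exists X; by rewrite inE XE subxx.
  right; split; apply: (@Es_card_strict _ X); rewrite ?XE //.
  - exact: proper_sub XS1.
  - exact: proper_sub XS2.
have [a1 [b1 c1]] := @side _ _ _ pX1 IH1 (Es_card S1).
have [a2 [b2 c2]] := @side _ _ _ pX2 IH2 (Es_card S2).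
rewrite cE cS.
have [K|[K|K]] : #|X| = 0 \/ #|X| = 1 \/ #|X| = 2.
  by case: #|X| X2 => [|[|[|]]]; auto.
- have E0 : #|Es X| = 0 by apply: Ex1; rewrite K.
  rewrite K; exact: ar0 E0 (a1 K) (a2 K).
- have E0 : #|Es X| = 0 by apply: Ex1; rewrite K.
  rewrite K; apply: ar1 E0 (b1 K) (b2 K).
  by rewrite -K.
- rewrite K in pX1 pX2 *.
  case: (Ref K) => [H1|[H1 H2]].
    exact: ar2 pX1 H1 ExE1 (c1 K) (c2 K).
  exact: ar3 pX1 ExE1 (@side_strict _ _ pX1 IH1 H1) (@side_strict _ _ pX2 IH2 H2).
Qed.

Lemma card_sum (A : {set T}) : #|A| = \sum_i (i \in A).
Proof.
rewrite -sum1_card big_mkcond /=; apply: eq_bigr => i _; by case: (i \in A).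
Qed.

Lemma card_sumS (A : {set {set T}}) (v : T) :
  #|[set E in A | v \in E]| = \sum_(E in A) (v \in E).
Proof.
rewrite -sum1_card big_mkcond /= [RHS]big_mkcond /=; apply: eq_bigr => E _.
by rewrite inE; case: (E \in A); case: (v \in E).
Qed.

Lemma handshake : \sum_v degree e v = 2 * #|edge_set e|.
Proof.
have H1 v : degree e v = #|[set E in edge_set e | v \in E]|.
  rewrite /degree.
  have -> : [set E in edge_set e | v \in E] = [set [set v; u] | u in [set u | e v u]].
    apply/setP => E; rewrite inE; apply/andP/imsetP.
      case=> /edgeP [a [b [eab ->]]]; rewrite !inE => /orP [] /eqP ?; subst.
        by exists b; rewrite ?inE.
      by exists a; rewrite ?inE 1?esym // setUC.
    case=> u; rewrite inE => evu ->; split; last by rewrite !inE eqxx.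
    by apply/edgeP; exists v, u.
  rewrite card_in_imset // => a b; rewrite !inE => eva evb /setP H.
  have Ha : (a == v) || (a == b) by move: (H a); rewrite !inE eqxx orbT.
  case/orP: Ha => /eqP // av.
  by move: eva; rewrite av eirr.
under eq_bigr => v _ do rewrite H1 card_sumS.
rewrite exchange_big /=.
under eq_bigr => E EE do rewrite -card_sum.
rewrite (eq_bigr (fun _ => 2)); first by rewrite sum_nat_const mulnC.
move=> E /edgeP [a [b [eab ->]]].
rewrite cards2; have ab : a != b by apply: contraTneq eab => ->; rewrite eirr.
by rewrite ab.
Qed.
End Aux.

Theorem mainTheorem3 (T : finType) (e : rel T) :
  symmetric e -> irreflexive e -> fragile e ->
  (4 <= #|T| -> 2 * #|edge_set e| <= 5 * #|T| - 10) /\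
  (0 < #|T| -> exists v : T, degree e v <= 4).
Proof.
move=> esym eirr frag.
have P1 : 4 <= #|T| -> 2 * #|edge_set e| <= 5 * #|T| - 10.
  move=> H4; have := @main_bound T e esym eirr frag [set: T]; rewrite cardsT.
  have -> : Es T e [set: T] = edge_set e.
    by apply/setP => E; rewrite inE subsetT andbT.
  move=> /(_ H4); lia.
split=> // Hp.
case: (leqP 4 #|T|) => H4.
  apply: NNPP => Hno.
  have Hd v : 5 <= degree e v.
    by rewrite leqNgt; apply/negP => Hv; apply: Hno; exists v.
  have : \sum_(v : T) 5 <= \sum_v degree e v by apply: leq_sum => v _.
  rewrite (@handshake T e esym eirr) sum_nat_const (_ : #|xpredT| = #|T|) //.
  have := P1 H4; lia.
case/card_gt0P: Hp => v _; exists v.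
by apply: leq_trans (max_card _) _; lia.
Qed.
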